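(* Let $X$ and $Y$ be nontrivial real Banach spaces. (a) If $X$ is locally octahedral, then $X\oplus_1 Y$ is locally octahedral. (b) If $X$ and $Y$ are locally octahedral and $1<p\leq\infty$, then $X\oplus_p Y$ is locally octahedral. (c) If $X\oplus_p Y$ is locally octahedral, where $1<p\leq\infty$, then $X$ is locally octahedral.
   Context: For $1\le p<\infty$, $X\oplus_p Y$ is $X\times Y$ with norm $\|(x,y)\|_p=(\|x\|^p+\|y\|^p)^{1/p}$; $X\oplus_\infty Y$ has norm $\max\{\|x\|,\|y\|\}$. A Banach space $Z$ is locally octahedral if for every $z\in Z$ and every $\varepsilon>0$ there is a $w\in S_Z$ (unit sphere) such that $\|sz+w\|\geq(1-\varepsilon)(|s|\|z\|+\|w\|)$ for all $s\in\mathbb{R}$. *)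

(* Defs.v *)
From HB Require Import structures.
From mathcomp Require Import all_boot all_order all_algebra.
From mathcomp Require Import all_classical all_reals all_analysis.
Set Implicit Arguments. Unset Strict Implicit. Unset Printing Implicit Defensive.
Import Order.TTheory GRing.Theory Num.Theory numFieldNormedType.Exports.
Local Open Scope ring_scope.

Definition loh_norm (R : realType) (V : lmodType R) (N : V -> R) : Prop :=
  forall (z : V) (eps : R), 0 < eps ->
    exists w : V, N w = 1 /\
      forall s : R, N (s *: z + w) >= (1 - eps) * (`|s| * N z + N w).

Definition locally_octahedral (R : realType) (X : normedModType R) : Prop :=
  @loh_norm R X (fun x => `|x|).

(* The p-norm on X x Y, p in [1, +oo] encoded as an extended real:
   p = r%:E gives (|x|^r + |y|^r)^(1/r), p = +oo gives max(|x|,|y|). *)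
Definition psum_norm (R : realType) (X Y : normedModType R) (p : \bar R)
  (z : (X * Y)%type) : R :=
  match p with
  | r%:E => (`|z.1| `^ r + `|z.2| `^ r) `^ r^-1
  | _ => Num.max `|z.1| `|z.2|
  end.

Definition locally_octahedral_psum (R : realType) (X Y : normedModType R)
  (p : \bar R) : Prop :=
  @loh_norm R (X * Y)%type (psum_norm p).

Definition nontrivial (R : realType) (X : normedModType R) : Prop :=
  exists x : X, x != 0.

(* Main.v *)
From HB Require Import structures.
From mathcomp Require Import all_boot all_order all_algebra.
From mathcomp Require Import all_classical all_reals all_analysis.
Require Import Defs.
From mathcomp Require Import ring lra.
Set Implicit Arguments. Unset Strict Implicit. Unset Printing Implicit Defensive.
Import Order.TTheory GRing.Theory Num.Theory numFieldNormedType.Exports.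
Local Open Scope ring_scope.

Section PN.
Variable R : realType.
Definition pn (p a b : R) := (a `^ p + b `^ p) `^ p^-1.

Lemma powRK (p a : R) : 0 < p -> 0 <= a -> (a `^ p) `^ p^-1 = a.
Proof. by move=> p0 a0; rewrite -powRrM mulfV ?gt_eqF // powRr1. Qed.

Lemma powRKV (p a : R) : 0 < p -> 0 <= a -> (a `^ p^-1) `^ p = a.
Proof. by move=> p0 a0; rewrite -powRrM mulVf ?gt_eqF // powRr1. Qed.

Lemma pn_ge0 p a b : 0 <= pn p a b.
Proof. exact: powR_ge0. Qed.

Lemma pn_powR p a b : 0 < p -> pn p a b `^ p = a `^ p + b `^ p.
Proof. by move=> p0; rewrite /pn powRKV // addr_ge0 ?powR_ge0. Qed.

Lemma pnZ p mu a b : 0 < p -> 0 <= mu -> 0 <= a -> 0 <= b ->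
  pn p (mu * a) (mu * b) = mu * pn p a b.
Proof.
move=> p0 m0 a0 b0; rewrite /pn !powRM // -mulrDr powRM ?powR_ge0 ?addr_ge0 ?powR_ge0 //.
by rewrite powRK.
Qed.

Lemma pn_le p a b a' b' : 0 < p -> 0 <= a -> 0 <= b -> a <= a' -> b <= b' ->
  pn p a b <= pn p a' b'.
Proof.
move=> p0 a0 b0 aa bb; have a'0 : 0 <= a' by apply: le_trans aa.
have b'0 : 0 <= b' by apply: le_trans bb.
rewrite /pn; apply: ge0_ler_powR; rewrite ?invr_ge0 ?(ltW p0) ?nnegrE ?addr_ge0 ?powR_ge0 //.
by rewrite lerD // ge0_ler_powR ?(ltW p0).
Qed.

Lemma pn_r0 p a : 0 < p -> 0 <= a -> pn p a 0 = a.
Proof. by move=> p0 a0; rewrite /pn powR0 ?gt_eqF // addr0 powRK. Qed.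

Lemma pn_0r p a : 0 < p -> 0 <= a -> pn p 0 a = a.
Proof. by move=> p0 a0; rewrite /pn powR0 ?gt_eqF // add0r powRK. Qed.

Lemma powR_le_self (p a : R) : 1 <= p -> 0 <= a <= 1 -> a `^ p <= a.
Proof.
move=> p1 /andP[a0 a1]; have [->|an0] := eqVneq a 0.
  by rewrite powR0 // gt_eqF // (lt_le_trans _ p1).
by rewrite ge1r_powR // lt_neqAle eq_sym an0 a0.
Qed.

Lemma pn_le_add p a b : 1 <= p -> 0 <= a -> 0 <= b -> pn p a b <= a + b.
Proof.
move=> p1 a0 b0; have p0 : 0 < p by apply: lt_le_trans p1.
case: (boolP (a + b == 0)) => [ab0|abn0].
  move: ab0; rewrite (paddr_eq0 a0 b0) => /andP[/eqP a00 /eqP b00].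
  by rewrite a00 b00 pn_r0 // addr0.
have abp : 0 < a + b by rewrite lt_neqAle eq_sym abn0 addr_ge0.
rewrite -(powRK p0 (addr_ge0 a0 b0)) /pn.
apply: ge0_ler_powR; rewrite ?invr_ge0 ?(ltW p0) ?nnegrE ?addr_ge0 ?powR_ge0 //.
set S := a + b.
have ea : a = S * (a / S) by rewrite mulrCA mulfV ?mulr1.
have eb : b = S * (b / S) by rewrite mulrCA mulfV ?mulr1.
rewrite {1}ea {1}eb.
have S0 : 0 <= S by exact: ltW.
rewrite (@powRM _ S (a / S)) ?divr_ge0 // (@powRM _ S (b / S)) ?divr_ge0 // -mulrDr.
rewrite -[X in _ <= X]mulr1 ler_wpM2l ?powR_ge0 //.
rewrite (@le_trans _ _ (a / S + b / S)) //.
  rewrite lerD // powR_le_self // divr_ge0 ?addr_ge0 ?(ltW abp) //= ler_pdivrMr // mul1r.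
    by rewrite lerDl.
  by rewrite lerDr.
by rewrite -mulrDl mulfV.
Qed.

Lemma half_convex (p x y : R) : 1 <= p -> 0 <= x -> 0 <= y ->
  (2^-1 * x + 2^-1 * y) `^ p <= 2^-1 * x `^ p + 2^-1 * y `^ p.
Proof.
move=> p1 x0 y0.
rewrite {2 4}(_ : 2^-1 = 1 - 2^-1); last by rewrite {2}(splitr 1) div1r addrK.
by apply: (convex_powR p1 (Itv01 _ _)) => //=;
  rewrite ?inE/= ?in_itv/= ?normr_ge0// ?invr_ge0// ?invf_le1 ?ler1n ?x0 ?y0.
Qed.

Lemma unit_ex (X : normedModType R) : nontrivial X -> exists u : X, `|u| = 1.
Proof.
move=> [x xn0]; exists (`|x|^-1 *: x).
by rewrite normrZ ger0_norm ?invr_ge0 // mulVf // normr_eq0.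
Qed.

Lemma loh_triv (V : lmodType R) (N : V -> R) (z : V) (eps : R) (w0 : V) :
  (forall v, 0 <= N v) -> N w0 = 1 -> 0 < eps ->
  (1 <= eps \/ (z = 0 /\ N z = 0)) ->
  exists w, N w = 1 /\ forall s : R, N (s *: z + w) >= (1 - eps) * (`|s| * N z + N w).
Proof.
move=> Nge0 Nw0 e0 [e1|[-> N0]]; exists w0; split => // s.
  apply: le_trans (Nge0 _); rewrite mulr_le0_ge0 ?subr_le0 //.
  by rewrite addr_ge0 ?mulr_ge0 // N0.
by rewrite scaler0 add0r N0 mulr0 add0r Nw0 mulr1 lerBlDr lerDl ltW.
Qed.

Lemma psum1 (X Y : normedModType R) (z : (X * Y)%type) :
  psum_norm 1%:E z = `|z.1| + `|z.2|.
Proof. by rewrite /psum_norm invr1 !powRr1 // addr_ge0. Qed.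

Lemma partA (X Y : normedModType R) : nontrivial X ->
  locally_octahedral X -> locally_octahedral_psum X Y 1%:E.
Proof.
move=> nX LX z eps e0.
have [u0 u01] := unit_ex nX.
have [e1|e1] := leP 1 eps.
  apply: (@loh_triv _ _ z eps (u0, 0)) => //; first by move=> v; exact: powR_ge0.
    by rewrite psum1 /= normr0 addr0.
  by left.
have [u [u1 Hu]] := LX z.1 eps e0.
exists (u, 0); split; first by rewrite psum1 /= normr0 addr0.
move=> s; rewrite !psum1 /= addr0 normr0 addr0 normrZ.
have := Hu s; rewrite u1 => H.
have h1 : 0 <= `|s| * `|z.2| by rewrite mulr_ge0.
nra.
Qed.

Lemma psuminf (X Y : normedModType R) (z : (X * Y)%type) :
  psum_norm +oo%E z = Num.max `|z.1| `|z.2|.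
Proof. by []. Qed.

Lemma psumr (X Y : normedModType R) r (z : (X * Y)%type) :
  psum_norm r%:E z = pn r `|z.1| `|z.2|.
Proof. by []. Qed.

Lemma partBinf (X Y : normedModType R) : nontrivial X ->
  locally_octahedral X -> locally_octahedral Y ->
  locally_octahedral_psum X Y +oo%E.
Proof.
move=> nX LX LY z eps e0.
have [u0 u01] := unit_ex nX.
have [e1|e1] := leP 1 eps.
  apply: (@loh_triv _ _ z eps (u0, 0)) => //.
    by move=> v; rewrite psuminf le_max normr_ge0.
    by rewrite psuminf /= normr0 u01; apply/max_idPl.
  by left.
have [u [u1 Hu]] := LX z.1 eps e0.
have [v [v1 Hv]] := LY z.2 eps e0.
exists (u, v); split; first by rewrite psuminf /= u1 v1; apply/max_idPl.
move=> s; rewrite !psuminf /= u1 v1.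
have hm : Num.max 1 1 = 1 :> R by apply/max_idPl.
rewrite hm.
have := Hu s; have := Hv s; rewrite u1 v1 => H2 H1.
have [ab|ab] := leP `|z.1| `|z.2|.
  apply: le_trans H2 _; rewrite le_max lexx orbT //.
apply: le_trans H1 _; rewrite le_max lexx //.
Qed.

Lemma scaled_loh (X : normedModType R) (x u : X) (c al : R) :
  0 <= c -> c <= 1 -> 0 <= al ->
  (forall s, c * (`|s| * `|x| + 1) <= `|s *: x + u|) ->
  forall s, c * (`|s| * `|x| + al) <= `|s *: x + al *: u|.
Proof.
move=> c0 c1 al0 H s.
have [->|aln0] := eqVneq al 0.
  rewrite scale0r addr0 addr0 normrZ.
  by rewrite -[X in _ <= X]mul1r ler_wpM2r // mulr_ge0.
have alp : 0 < al by rewrite lt_neqAle eq_sym aln0.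
have -> : s *: x + al *: u = al *: ((s / al) *: x + u).
  by rewrite scalerDr scalerA mulrCA mulfV // mulr1.
rewrite normrZ ger0_norm //.
have := H (s / al); rewrite normrM normfV (ger0_norm (ltW alp)).
move=> h; apply: le_trans (ler_wpM2l al0 h).
rewrite le_eqVlt; apply/orP; left; apply/eqP; field.
by [].
Qed.

Lemma partBr (X Y : normedModType R) (r : R) : 1 < r -> nontrivial X ->
  locally_octahedral X -> locally_octahedral Y ->
  locally_octahedral_psum X Y r%:E.
Proof.
move=> r1 nX LX LY [x y] eps e0.
have r0 : 0 < r by apply: lt_trans r1.
have [u0 u01] := unit_ex nX.
have Nge0 : forall v : X * Y, 0 <= psum_norm r%:E v by move=> v; exact: pn_ge0.
have Nu0 : psum_norm r%:E (u0, 0 : Y) = 1 by rewrite psumr /= normr0 u01 pn_r0.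
have [e1|e1] := leP 1 eps.
  by apply: (@loh_triv _ _ (x, y) eps (u0, 0) Nge0 Nu0 e0); left.
set a := `|x|; set b := `|y|; set Nz := pn r a b.
have [Nz0|Nzn0] := eqVneq Nz 0.
  have : (pn r a b) `^ r = 0 by rewrite -/Nz Nz0 powR0 // gt_eqF.
  rewrite pn_powR // => /eqP; rewrite paddr_eq0 ?powR_ge0 // => /andP[/eqP ha /eqP hb].
  have x0 : x = 0 by apply/normr0_eq0; exact: (powR_eq0_eq0 ha).
  have y0 : y = 0 by apply/normr0_eq0; exact: (powR_eq0_eq0 hb).
  apply: (@loh_triv _ _ (x, y) eps (u0, 0) Nge0 Nu0 e0); right; rewrite x0 y0; split; first by [].
  by rewrite psumr /= !normr0 pn_r0.
have a0 : 0 <= a := normr_ge0 x.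
have b0 : 0 <= b := normr_ge0 y.
have Nzp : 0 < Nz by rewrite lt_neqAle eq_sym Nzn0 pn_ge0.
set lam := Nz^-1.
have lam0 : 0 <= lam by rewrite invr_ge0 ltW.
have [u [u1 Hu]] := LX x eps e0.
have [v [v1 Hv]] := LY y eps e0.
have c0 : 0 <= 1 - eps by rewrite subr_ge0 ltW.
have c1 : 1 - eps <= 1 by rewrite lerBlDr lerDl ltW.
have Hu1 : forall s, (1 - eps) * (`|s| * `|x| + 1) <= `|s *: x + u|.
  by move=> s; have := Hu s; rewrite u1.
have Hv1 : forall s, (1 - eps) * (`|s| * `|y| + 1) <= `|s *: y + v|.
  by move=> s; have := Hv s; rewrite v1.
have Hu' := @scaled_loh _ x u (1 - eps) (lam * a) c0 c1 (mulr_ge0 lam0 (normr_ge0 _)) Hu1.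
have Hv' := @scaled_loh _ y v (1 - eps) (lam * b) c0 c1 (mulr_ge0 lam0 (normr_ge0 _)) Hv1.
have Nw : psum_norm r%:E (x, y) = Nz by rewrite psumr.
have Nw1 : psum_norm r%:E ((lam * a) *: u, (lam * b) *: v) = 1.
  rewrite psumr /=.
  rewrite (normrZ (lam * a) u) (normrZ (lam * b) v) u1 v1 !mulr1.
  rewrite [X in pn r X _]ger0_norm; last exact: mulr_ge0 lam0 a0.
  rewrite [X in pn r _ X]ger0_norm; last exact: mulr_ge0 lam0 b0.
  by rewrite (pnZ r0 lam0 a0 b0) -/Nz mulVf.
exists ((lam * a) *: u, (lam * b) *: v); split; first exact: Nw1.
move=> s; rewrite Nw1 Nw psumr /=.
apply: le_trans (pn_le r0 _ _ (Hu' s) (Hv' s)); last first.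
- by rewrite mulr_ge0 // addr_ge0 ?mulr_ge0.
- by rewrite mulr_ge0 // addr_ge0 ?mulr_ge0.
- have mu0 : 0 <= (1 - eps) * (`|s| + lam) by rewrite mulr_ge0 // addr_ge0.
  rewrite -/a -/b -!mulrDl !mulrA (pnZ r0 mu0 a0 b0) -/Nz -mulrA [X in _ <= _ * X]mulrDl /lam mulVf ?gt_eqF //.
Qed.

Lemma finish (X : normedModType R) (x u : X) (c e2 eps : R) :
  0 < `|u| -> `|u| <= 1 -> 0 <= e2 ->
  (forall s, c * (`|s| * `|x| + 1) - e2 <= `|s *: x + u|) ->
  1 - eps <= c - e2 - (1 - `|u|) ->
  exists w : X, `|w| = 1 /\
    forall s, (1 - eps) * (`|s| * `|x| + `|w|) <= `|s *: x + w|.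
Proof.
move=> al0 al1 e20 H hc.
exists (`|u|^-1 *: u).
have hw : `|(`|u|^-1 *: u)| = 1.
  by rewrite normrZ ger0_norm ?invr_ge0 ?ltW // mulVf ?gt_eqF.
split => // s; rewrite hw.
have -> : s *: x + `|u|^-1 *: u = (s *: x + u) + (`|u|^-1 - 1) *: u.
  by rewrite scalerBl scale1r -addrA subrKC.
apply: le_trans (lerB_normD _ _).
have ge1 : 1 <= `|u|^-1 by rewrite invf_ge1.
rewrite normrZ ger0_norm ?subr_ge0 // [X in _ <= _ - X]mulrBl mulVf ?gt_eqF // mul1r.
have := H s; set t := `|s| * `|x|; have t0 : 0 <= t by rewrite mulr_ge0.
move=> Hs; set al := `|u| in al0 al1 hc Hs *.
have h3 : 0 <= (e2 + (1 - al)) * t by rewrite mulr_ge0 // addr_ge0 // subr_ge0.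
have h4 : (1 - eps) * t <= (c - e2 - (1 - al)) * t by rewrite ler_wpM2r.
nra.
Qed.

Lemma partCinf (X Y : normedModType R) : nontrivial X ->
  locally_octahedral_psum X Y +oo%E -> locally_octahedral X.
Proof.
move=> nX LXY x eps e0.
have [u0 u01] := unit_ex nX.
have [e1|e1] := leP 1 eps.
  by apply: (@loh_triv _ (fun x : X => `|x|) x eps u0 (@normr_ge0 _ _) u01 e0); left.
have [x0|xn0] := eqVneq x 0.
  by apply: (@loh_triv _ (fun x : X => `|x|) x eps u0 (@normr_ge0 _ _) u01 e0);
    right; rewrite x0 normr0.
have ap : 0 < `|x| by rewrite normr_gt0.
set a := `|x| in ap *.
set e' := eps / 4.
have e'0 : 0 < e' by rewrite divr_gt0.
have e'1 : e' < 4^-1 by rewrite /e'; lra.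
have e'e : eps = 4 * e' by rewrite /e'; lra.
have [[u v] [Nw H]] := LXY (x, 0) e' e'0.
move: Nw; rewrite psuminf /= => Nw.
have al1 : `|u| <= 1 by rewrite -Nw le_max lexx.
have be1 : `|v| <= 1 by rewrite -Nw le_max lexx orbT.
have H' : forall s, (1 - e') * (`|s| * a + 1) <= Num.max `|s *: x + u| `|v|.
  move=> s; have := H s; rewrite !psuminf /= Nw normr0 scaler0 add0r.
  by rewrite (max_idPl (normr_ge0 x)).
have st1 : forall s, 1 <= `|s| * a -> (1 - e') * (`|s| * a + 1) <= `|s *: x + u|.
  move=> s ht; have := H' s; rewrite le_max => /orP[//|hb].
  have : (1 - e') * 2 <= (1 - e') * (`|s| * a + 1).
    rewrite ler_wpM2l ?subr_ge0; lra.
  lra.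
have st2 : forall s, (1 - e') * (`|s| * a + 1) - e' <= `|s *: x + u|.
  move=> s; have [ht|ht] := leP 1 (`|s| * a).
    by apply: le_trans (st1 s ht); rewrite lerBlDr lerDl ltW.
  set s1 := if 0 <= s then a^-1 else - a^-1.
  have hs1 : `|s1| * a = 1.
    by rewrite /s1; case: ifP => _; rewrite ?normrN ger0_norm ?invr_ge0 ?ltW // mulVf ?gt_eqF.
  have hd : `|s - s1| * a = 1 - `|s| * a.
    rewrite /s1; case: ifP => hs.
      rewrite distrC ger0_norm ?(ger0_norm hs) ?mulrBl ?mulVf ?gt_eqF //.
      rewrite subr_ge0 -(ler_pM2r ap) mulVf ?gt_eqF //.
      by move: ht; rewrite ger0_norm // => /ltW.
    have hs' : s < 0 by rewrite ltNge hs.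
    rewrite opprK (ltr0_norm hs') mulNr opprK ger0_norm ?mulrDl ?mulVf ?gt_eqF //.
      by rewrite addrC.
    rewrite -(ler_pM2r ap) mul0r mulrDl mulVf ?gt_eqF //.
    by move: ht; rewrite (ltr0_norm hs') mulNr; lra.
  have h1 : (1 - e') * (`|s1| * a + 1) <= `|s1 *: x + u| by apply: st1; rewrite hs1.
  have -> : s *: x + u = (s1 *: x + u) + (s - s1) *: x.
    by rewrite scalerBl addrAC subrKC.
  apply: le_trans (lerB_normD _ _); rewrite normrZ -/a hd.
  move: h1; rewrite hs1.
  set t := `|s| * a; have t0 : 0 <= t := mulr_ge0 (normr_ge0 _) (ltW ap).
  have h5 : 0 <= e' * t := mulr_ge0 (ltW e'0) t0.
  nra.
have hal : 1 - e' - e' <= `|u|.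
  by have := st2 0; rewrite normr0 mul0r add0r mulr1 scale0r add0r.
apply: (@finish _ x u (1 - e') e' eps) => //.
- by apply: lt_le_trans hal; rewrite /e'; lra.
- exact: ltW.
- by rewrite /e'; lra.
Qed.

Lemma ar_two : (1:R) + 1 = 2. Proof. lra. Qed.
Lemma ar1 (P m B A c2 : R) : c2 = (1 - m) * P -> c2 <= A + B ->
  A <= P * (2^-1 + 2^-1 * (1 - B)) -> (P / 2 - 1) * B <= P * m.
Proof. move=> h1 h2 h3; nra. Qed.
Lemma ar2 (eps m c be al del : R) : del = eps / 4 -> 1 - m <= c -> m <= eps / 2 ->
  be <= del -> 1 - al <= del -> 1 - eps <= c - be - (1 - al).
Proof. lra. Qed.
Lemma ar_sub (x y : R) : x - (x - y) = y. Proof. lra. Qed.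
Lemma ar3 (x y : R) : 1 < x -> 0 <= y -> x = 1 - y -> False. Proof. lra. Qed.
Lemma ar4 (A al B D del : R) : A <= al -> A = 1 - B -> B <= D -> D <= del -> 1 - al <= del.
Proof. lra. Qed.
Lemma ar5 (al del : R) : 1 - al <= del -> del < 4^-1 -> 0 < al. Proof. lra. Qed.
Lemma ar6 (x y A b : R) : x <= y -> y <= A + b -> x - b <= A. Proof. lra. Qed.

Lemma partCr (X Y : normedModType R) (r : R) : 1 < r -> nontrivial X ->
  locally_octahedral_psum X Y r%:E -> locally_octahedral X.
Proof.
move=> r1 nX LXY x eps e0.
have r0 : 0 < r by apply: lt_trans r1.
have [u0 u01] := unit_ex nX.
have [e1|e1] := leP 1 eps.
  by apply: (@loh_triv _ (fun x : X => `|x|) x eps u0 (@normr_ge0 _ _) u01 e0); left.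
have [x0|xn0] := eqVneq x 0.
  by apply: (@loh_triv _ (fun x : X => `|x|) x eps u0 (@normr_ge0 _ _) u01 e0);
    right; rewrite x0 normr0.
have ap : 0 < `|x| by rewrite normr_gt0.
set a := `|x| in ap *.
set del := eps / 4.
have del0 : 0 < del by rewrite /del; lra.
have del1 : del < 4^-1 by rewrite /del; lra.
set P := 2 `^ r.
have P2 : 2 < P.
  have -> : 2 = 2 `^ 1 :> R by rewrite powRr1.
  rewrite /P /powR (negbTE (_ : (2:R) != 0)) // ltr_expR ltr_pM2r //.
  by rewrite ln_gt0 // ltr1n.
set K := P / 2 - 1.
have K0 : 0 < K by rewrite /K; lra.
have P0 : 0 < P by lra.
set D := del `^ r.
have D0 : 0 < D by rewrite powR_gt0.
have Dle : D <= del by apply: powR_le_self; [exact: ltW | apply/andP; split; lra].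
set m := Num.min (Num.min (D * K / P) (eps / 2)) (2^-1).
have m0 : 0 < m.
  by rewrite /m !lt_min divr_gt0 ?mulr_gt0 //= divr_gt0 //= invr_gt0.
have m1 : m <= D * K / P by rewrite /m !ge_min lexx.
have m2 : m <= eps / 2 by rewrite /m !ge_min lexx orbT.
have m3 : m <= 2^-1 by rewrite /m ge_min lexx orbT.
have m01 : 0 < 1 - m <= 1 by apply/andP; split; lra.
set c := (1 - m) `^ r^-1.
have cr : c `^ r = 1 - m by rewrite /c powRKV //; lra.
have cge : 1 - m <= c by rewrite /c ger1_powR // invf_le1 ?ltW.
have clt : c < 1.
  have ri0 : 0 < r^-1 by rewrite invr_gt0.
  have := @gt0_ltr_powR _ r^-1 ri0 (1 - m) 1.
  rewrite powR1 /= => h; apply: h; rewrite ?nnegrE; lra.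
set e' := 1 - c.
have e'0 : 0 < e' by rewrite /e'; lra.
have [[u v] [Nw H]] := LXY (x, 0) e' e'0.
move: Nw; rewrite psumr /= => Nw.
have ce : 1 - e' = c by rewrite /e' ar_sub.
set al := `|u| in Nw *; set be := `|v| in Nw *.
have al0 : 0 <= al := normr_ge0 u.
have be0 : 0 <= be := normr_ge0 v.
have H' : forall s, c * (`|s| * a + 1) <= pn r `|s *: x + u| be.
  move=> s; have := H s; rewrite !psumr /= Nw normr0 scaler0 add0r ce pn_r0 //.
have sum1 : al `^ r + be `^ r = 1.
  by rewrite -pn_powR // Nw powR1.
have ai0 : 0 <= a^-1 by rewrite invr_ge0 ltW.
have hs1 : `|a^-1 *: x + u| <= 1 + al.
  apply: (le_trans (ler_normD (a^-1 *: x) u)); rewrite normrZ (ger0_norm ai0) -/a.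
  by rewrite mulVf ?gt_eqF.
have h2 : c * 2 <= pn r (1 + al) be.
  have h := H' a^-1.
  rewrite (ger0_norm ai0) mulVf in h; last by rewrite gt_eqF.
  rewrite ar_two in h; apply: le_trans h _.
  exact: (pn_le r0 (normr_ge0 _) be0 hs1 (lexx be)).
have c0 : 0 <= c := powR_ge0 _ _.
have h3 : (c * 2) `^ r <= (1 + al) `^ r + be `^ r.
  rewrite -pn_powR //; apply: ge0_ler_powR; rewrite ?nnegrE ?(ltW r0) ?pn_ge0 //.
  by rewrite mulr_ge0.
have h4 : (c * 2) `^ r = (1 - m) * P by rewrite powRM ?powR_ge0 // cr.
have h5 : (1 + al) `^ r <= P * (2^-1 + 2^-1 * al `^ r).
  have -> : 1 + al = 2 * (2^-1 * 1 + 2^-1 * al) by field.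
  rewrite powRM //; last by rewrite addr_ge0 ?mulr_ge0.
  rewrite ler_wpM2l ?powR_ge0 //.
  apply: le_trans (half_convex (ltW r1) ler01 al0) _; rewrite powR1 /= mulr1 //.
set B := be `^ r in sum1 h3 *.
have hal : al `^ r = 1 - B by rewrite -sum1 addrK.
have hB : K * B <= P * m.
  rewrite hal in h5; exact: (ar1 h4 h3 h5).
have hB2 : B <= D.
  rewrite -(ler_pM2l K0); apply: le_trans hB _.
  by rewrite mulrC -ler_pdivlMr // (mulrC K).
have beD : be <= del.
  rewrite -(powRK r0 be0) -(powRK r0 (ltW del0)).
  apply: ge0_ler_powR; rewrite ?nnegrE ?powR_ge0 //.
  by rewrite invr_ge0 ltW.
have al1 : al <= 1.
  rewrite leNgt; apply/negP => hal1.
  have := @gt0_ltr_powR _ r r0 1 al; rewrite powR1 /= => h.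
  have h6 : 1 < al `^ r by apply: h; rewrite ?nnegrE //; exact: ltW.
  exact: (ar3 h6 (powR_ge0 be r) hal).
have alr : al `^ r <= al by apply: powR_le_self; [exact: ltW | by rewrite al0 al1].
have al1' : 1 - al <= del := ar4 alr hal hB2 Dle.
apply: (@finish _ x u c be eps) => //.
- exact: (ar5 al1' del1).
- move=> s; exact: (ar6 (H' s) (pn_le_add (ltW r1) (normr_ge0 (s *: x + u)) be0)).
- exact: (ar2 (erefl del) cge m2 beD al1').
Qed.
End PN.

Unset Implicit Arguments.

Theorem proposition4p1 (R : realType) (X Y : completeNormedModType R) :
  nontrivial X -> nontrivial Y ->
  (locally_octahedral X -> locally_octahedral_psum X Y 1%:E) /\
  (forall p : \bar R, (1%:E < p)%E ->
     locally_octahedral X -> locally_octahedral Y ->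
     locally_octahedral_psum X Y p) /\
  (forall p : \bar R, (1%:E < p)%E ->
     locally_octahedral_psum X Y p -> locally_octahedral X).
Proof.
move=> nX nY; split; first exact: partA.
split.
- move=> p; case: p => [r||] hp LX LY.
  + by apply: partBr => //; rewrite -lte_fin.
  + exact: partBinf.
  + by [].
- move=> p; case: p => [r||] hp LXY.
  + by apply: partCr LXY => //; rewrite -lte_fin.
  + exact: partCinf LXY.
  + by [].
Qed.
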